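(* For $m,k$ let $E(m,k)$ be the event that there is a subset $U\subset V_n$ with $|U|=m$ and $|U^{*2}|\ge k$. Then there is an increasing positive function $\varepsilon_3(\cdot)$ and a constant $C_3=C_3(r)$ such that for every $\eta>0$ and every $m\le\varepsilon_3(\eta)n$, $$\mathbb P\left[E(m,(1+\eta)m)\right]\le C_3\exp\left(-\frac{\eta^2}{8r}\,m\log(n/m)\right).$$
   Context: Fix an integer $r\ge3$, let $V_n=\{1,\dots,n\}$ with $rn$ even, and let $\mathbb P$ be the law of the random multigraph $G_n$ on $V_n$ obtained by giving each vertex $r$ half-edges and pairing all $rn$ half-edges uniformly at random. Write $y\sim x$ if $y$ and $x$ are joined by an edge of $G_n$. For $U\subset V_n$, $U^{*2}:=\{y\in V_n: y\sim x\text{ and }y\sim z\text{ for some }x,z\in U\text{ with }x\ne z\}$ (it may contain vertices of $U$). *)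

(* Defs.v *)
From mathcomp Require Import all_boot.
From mathcomp Require Import perm fingroup.
From Stdlib Require Import Reals.

Set Implicit Arguments.
Unset Strict Implicit.
Unset Printing Implicit Defensive.

(* Half-edges of the configuration model on V_n = 'I_n (vertices 0..n-1,
   standing for 1..n), each vertex carrying r half-edges. *)
Definition halfedge (n r : nat) : finType := ('I_n * 'I_r)%type.

(* A perfect matching of the half-edges: a fixed-point-free involution. *)
Definition is_pairing (n r : nat) (f : {perm halfedge n r}) : bool :=
  [forall h, (f (f h) == h) && (f h != h)].

Definition adj (n r : nat) (f : {perm halfedge n r}) (y x : 'I_n) : bool :=
  [exists i : 'I_r, exists j : 'I_r, f (y, i) == (x, j)].

Definition star2 (n r : nat) (f : {perm halfedge n r}) (U : {set 'I_n})
  : {set 'I_n} :=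
  [set y | [exists x in U, exists z in U, (x != z) && adj f y x && adj f y z]].

Definition Rleb (x y : R) : bool := if Rle_dec x y then true else false.

Definition event_E (n r : nat) (m : nat) (k : R) (f : {perm halfedge n r})
  : bool :=
  [exists U : {set 'I_n}, (#|U| == m) && Rleb k (INR #|star2 f U|)].

Definition prob_pairing (n r : nat) (E : {perm halfedge n r} -> bool) : R :=
  (INR #|[set f : {perm halfedge n r} | is_pairing f && E f]| /
   INR #|[set f : {perm halfedge n r} | is_pairing f]|)%R.

(* Main.v *)
From Stdlib Require Import Reals Lra.
Require Import Defs.
From mathcomp Require Import all_boot.
From mathcomp Require Import perm fingroup.

Set Implicit Arguments.
Unset Strict Implicit.
Unset Printing Implicit Defensive.


Lemma card_pairs (I J : finType) (A : {set I}) (B : I -> {set J}) :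
  #|[set p : I * J | (p.1 \in A) && (p.2 \in B p.1)]| = \sum_(i in A) #|B i|.
Proof.
symmetry.
rewrite big_mkcond /= (eq_bigr (fun i => \sum_j (if (i \in A) && (j \in B i) then 1 else 0))); last first.
  move=> i _; case: (boolP (i \in A)) => iA /=.
    by rewrite -sum1_card big_mkcond.
  by rewrite big1.
rewrite pair_bigA /= -sum1_card.
rewrite [RHS]big_mkcond; apply: eq_bigr => p _; by rewrite inE.
Qed.

Section Comb.
Variables n r : nat.
Local Notation H := (halfedge n r).

Definition HS (X : {set 'I_n}) : {set H} := [set h : H | h.1 \in X].
Definition Fset (T D : {set H}) : {set {perm H}} :=
  [set f | is_pairing f && [forall d in D, (f d \in T) && (f d \notin D)]].
Definition Pairs : {set {perm H}} := [set f | is_pairing f].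

Lemma pairingP (f : {perm H}) : is_pairing f ->
  (forall h, f (f h) = h) /\ (forall h, f h != h).
Proof.
move=> /forallP P; split=> h; by case/andP: (P h) => /eqP.
Qed.

Lemma pairing_switch (f : {perm H}) a b : is_pairing f ->
  is_pairing (tperm a b * f * tperm a b)%g.
Proof.
move=> /pairingP [ff fn]; apply/forallP => h; rewrite !permM tpermK ff tpermK eqxx /=.
apply/negP => /eqP E.
have : f (tperm a b h) = tperm a b h by rewrite -{2}E tpermK.
by move/eqP; rewrite (negbTE (fn _)).
Qed.

Lemma FsetP (T D : {set H}) f : f \in Fset T D ->
  [/\ is_pairing f & forall d, d \in D -> (f d \in T) /\ (f d \notin D)].
Proof.
rewrite inE => /andP [pf /forallP P]; split => // d dD.
by move: (P d); rewrite dD /= => /andP.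
Qed.

Lemma switch_step (T D : {set H}) d : d \in D ->
  #|Fset T D| * (#|H| - 2 * #|D|) <= #|Fset T (D :\ d)| * #|T|.
Proof.
move=> dD.
pose X := [set p : {perm H} * H | (p.1 \in Fset T D) && (p.2 \in ~: (D :|: p.1 @: D))].
have lb : #|Fset T D| * (#|H| - 2 * #|D|) <= #|X|.
  rewrite /X (card_pairs (Fset T D) (fun f => ~: (D :|: f @: D))) -sum_nat_const; apply: leq_sum => f _.
  rewrite [#|~: _|]cardsCs setCK; apply: leq_sub2l; apply: (leq_trans (leq_card_setU _ _).1).
  by rewrite mul2n -addnn leq_add2l leq_imset_card.
pose Phi (p : {perm H} * H) :=
  ((tperm (p.1 d) p.2 * p.1 * tperm (p.1 d) p.2)%g, p.1 d).
have key : forall p, p \in X ->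
   [/\ is_pairing p.1, p.1 d != d, p.1 d != p.2, d != p.2 &
       forall d', d' \in D :\ d -> (Phi p).1 d' = p.1 d'].
  move=> [f c]; rewrite inE /= => /andP [/FsetP [pf Pf]].
  rewrite inE in_setU negb_or => /andP [cD cfD].
  have [ff fn] := pairingP pf.
  have [fdT fdD] := Pf d dD.
  have fdc : f d != c by apply: contraNneq cfD => <-; rewrite imset_f.
  have dc : d != c by apply: contraNneq cD => <-.
  split => // d' /setD1P [d'd d'D].
  rewrite /Phi /= !permM.
  have [fd'T fd'D] := Pf d' d'D.
  rewrite (@tpermD _ (f d) c d'); last by apply: contraNneq cD => ->.
    rewrite tpermD //; last by apply: contraNneq cfD => ->; rewrite imset_f.
    by apply: contra d'd => /eqP /perm_inj ->.
  by apply: contraNneq fdD => ->.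
have ub : #|X| <= #|Fset T (D :\ d)| * #|T|.
  rewrite -cardsX -(@card_in_imset _ _ Phi X); last first.
    move=> [f1 c1] [f2 c2] /key [p1 n1 n1' n1'' _] /key [p2 n2 n2' n2'' _] /=.
    rewrite /Phi /= => [[E1 E2]].
    have ec : forall (f : {perm H}) c, f d != d -> d != c ->
        (tperm (f d) c * f * tperm (f d) c)%g d = c.
      by move=> f c h1 h2; rewrite !permM (tpermD h1) ?tpermL // eq_sym.
    have c12 : c1 = c2 by rewrite -(ec f1 c1) // E1 ec.
    subst c2; congr (_, _).
    apply/permP => x.
    have : (tperm (f1 d) c1 * (tperm (f1 d) c1 * f1 * tperm (f1 d) c1) * tperm (f1 d) c1)%g x
      = (tperm (f2 d) c1 * (tperm (f2 d) c1 * f2 * tperm (f2 d) c1) * tperm (f2 d) c1)%g x.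
      by rewrite E1 E2.
    by rewrite !permM !tpermK.
  apply: subset_leq_card; apply/subsetP => _ /imsetP [[f c] pX ->].
  have [pf n1 n2 n3 Fd] := key _ pX.
  move: pX; rewrite inE /= => /andP [/FsetP [_ Pf] _].
  rewrite inE /=; apply/andP; split; last by have [] := Pf d dD.
  rewrite inE pairing_switch //=; apply/forallP => d'; apply/implyP => d'D.
  rewrite (Fd d' d'D) /=.
  move: d'D => /setD1P [_ d'D]; have [h1 h2] := Pf d' d'D.
  rewrite h1 /=; apply: contra h2; by move/setD1P => [].
exact: leq_trans lb ub.
Qed.

Lemma Fset_sub (T D : {set H}) : Fset T D \subset Pairs.
Proof. by apply/subsetP => f /FsetP [pf _]; rewrite inE. Qed.

Lemma switch_bound (T D : {set H}) :
  #|Fset T D| * (#|H| - 2 * #|D|) ^ #|D| <= #|Pairs| * #|T| ^ #|D|.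
Proof.
move: {2}#|D| (erefl #|D|) => k; elim: k D => [|k IH] D Dk.
  by rewrite ?Dk !expn0 !muln1 subset_leq_card // Fset_sub.
have : 0 < #|D| by rewrite Dk.
case/card_gt0P => d dD.
have Dk' : #|D :\ d| = k by move: Dk; rewrite (cardsD1 d) dD add1n => [[]].
have := switch_step T dD; rewrite Dk => st.
have ih := IH _ Dk'.
rewrite expnS mulnA (leq_trans (leq_mul st (leqnn _))) //.
rewrite expnS mulnA (mulnAC #|Fset _ _|) (mulnAC #|Pairs|) leq_mul2r; apply/orP; right.
rewrite Dk' in ih; apply: (leq_trans _ ih); rewrite leq_mul2l; apply/orP; right.
case: k {IH Dk Dk' st ih} => [|k]; first by rewrite !expn0.
by rewrite leq_exp2r // leq_sub2l // leq_mul2l ltnW.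
Qed.

End Comb.


Lemma card_HS n r (X : {set 'I_n}) : #|HS r X| = #|X| * r.
Proof.
have E := card_pairs X (fun _ => [set: 'I_r]).
rewrite sum_nat_const cardsT card_ord in E; rewrite -E.
by apply: eq_card => [[a b]]; rewrite !inE andbT.
Qed.

Section Wit.
Variables n r : nat.
Local Notation H := (halfedge n r).

Lemma subset_card_exact (T : finType) (D : {set T}) k : k <= #|D| ->
  exists2 D' : {set T}, D' \subset D & #|D'| = k.
Proof.
elim: k => [|k IH] hk; first by exists (set0 : {set T}); rewrite ?sub0set ?cards0.
have [D' sD' cD'] := IH (ltnW hk).
have : 0 < #|D :\: D'| by rewrite cardsD (setIidPr sD') cD' subn_gt0.
case/card_gt0P => x /setDP [xD xD'].
exists (x |: D'); first by rewrite subUset sub1set xD sD'.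
by rewrite cardsU1 xD' cD'.
Qed.

Lemma witness (f : {perm H}) (U : {set 'I_n}) : 0 < r -> is_pairing f ->
  2 * #|star2 f U| <= r * #|U| /\
  exists (A : {set 'I_n}) (D : {set H}), [/\ #|A| <= #|U| + #|star2 f U|, D \subset HS r A,
      #|A| + #|star2 f U| <= #|D| + #|U| & f \in Fset (HS r A) D].
Proof.
move=> r0 pf; have [ff fn] := pairingP pf.
set W := star2 f U.
have finj : injective f by exact: perm_inj.
pose i0 := Ordinal r0.
have [c Hc] : exists c : 'I_n -> 'I_r * 'I_r, forall y, y \in W ->
    [/\ (c y).1 != (c y).2, f (y, (c y).1) \in HS r U & f (y, (c y).2) \in HS r U].
  apply: (@fin_all_exists _ (fun _ => ('I_r * 'I_r)%type)
     (fun y p => y \in W -> [/\ p.1 != p.2, f (y, p.1) \in HS r U & f (y, p.2) \in HS r U])).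
  move=> y; case: (boolP (y \in W)) => yW; last by exists (i0, i0).
  move: yW; rewrite inE => /existsP [x /andP [xU /existsP [z /andP [zU]]]].
  case/andP => /andP [xz /existsP [i1 /existsP [j1 /eqP e1]]] /existsP [i2 /existsP [j2 /eqP e2]].
  exists (i1, i2) => _ /=; split.
  - apply: contraNneq xz => e; move: e1; rewrite e e2 => [[->]] //.
  - by rewrite e1 inE.
  - by rewrite e2 inE.
clearbody W.
pose g (p : 'I_n * bool) : H := (p.1, if p.2 then (c p.1).1 else (c p.1).2).
have ginj : forall S : {set 'I_n}, S \subset W -> {in setX S [set: bool] &, injective g}.
  move=> S sSW [y b] [y' b'] /setXP [yS _] /setXP [y'S _] /=; rewrite /g /=.
  move=> [e]; subst y'.
  have [h1 _ _] := Hc y (subsetP sSW _ yS).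
  by case: b; case: b' => // E; rewrite E eqxx in h1.
set S1 := [set h : H | (h.1 \in W) && (f h \in HS r U)].
have gS : forall S : {set 'I_n}, S \subset W -> g @: setX S [set: bool] \subset S1.
  move=> S sSW; apply/subsetP => _ /imsetP [[y b] /setXP [yS _] ->].
  have yW := subsetP sSW _ yS.
  have [_ h2 h3] := Hc y yW.
  by rewrite inE /g /= yW; case: b.
have cS : forall S : {set 'I_n}, S \subset W -> #|S| * 2 = #|g @: setX S [set: bool]|.
  by move=> S sSW; rewrite card_in_imset ?cardsX ?cardsT ?card_bool //; apply: ginj.
have S1lb : 2 * #|W| <= #|S1|.
  by rewrite mulnC (cS W (subxx _)) subset_leq_card // gS.
have S1ub : #|S1| <= r * #|U|.
  rewrite -(card_imset S1 finj) mulnC -card_HS subset_leq_card //.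
  by apply/subsetP => x /imsetP [h hS ->]; move: hS; rewrite inE => /andP [_ ?].
split; first exact: leq_trans S1lb S1ub.
set A := U :|: W.
set S1' := [set h in S1 | h.1 \notin U].
have S1'lb : 2 * #|W :\: U| <= #|S1'|.
  rewrite mulnC (cS (W :\: U) (subsetDl _ _)) subset_leq_card //.
  apply/subsetP => _ /imsetP [[y b] /setXP [/setDP [yW yU] _] ->].
  rewrite inE /= yU andbT; apply: (subsetP (gS W (subxx _))).
  by apply/imsetP; exists (y, b) => //; apply/setXP; split => //; rewrite in_setT.
set G := [set h : H | (h \in HS r A) && (f h \in HS r A)].
have sUA : HS r U \subset HS r A.
  by apply/subsetP => h; rewrite !inE => ->.
have sWA : forall h : H, h.1 \in W -> h \in HS r A.
  by move=> h hW; rewrite /HS inE in_setU hW orbT.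
have disj : [disjoint S1 & f @: S1'].
  rewrite disjoint_subset; apply/subsetP => x xS1; rewrite inE; apply/imsetP => [[h hS1' xe]].
  move: xS1; rewrite inE => /andP [_ fxU].
  move: hS1'; rewrite inE => /andP [_ hU].
  by move: fxU; rewrite xe ff inE (negbTE hU).
have Glb : #|S1| + #|S1'| <= #|G|.
  rewrite -(card_imset S1' finj).
  have <- : #|S1 :|: f @: S1'| = #|S1| + #|f @: S1'|.
    by apply/eqP; rewrite (leq_card_setU S1 (f @: S1')).2.
  apply: subset_leq_card; rewrite subUset; apply/andP; split.
    apply/subsetP => h hS; move: hS; rewrite inE => /andP [hW fU].
    by rewrite inE (sWA h hW) (subsetP sUA _ fU).
  apply/subsetP => x /imsetP [h hS ->]; move: hS; rewrite inE => /andP [hS hU].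
  move: hS; rewrite inE => /andP [hW fU].
  by rewrite inE (subsetP sUA _ fU) ff (sWA h hW).
pose rk (h : H) := enum_rank h.
set D0 := [set h in G | (rk h < rk (f h))%N].
have D0G : D0 \subset G by apply/subsetP => h; rewrite inE => /andP [].
have GD0 : #|G| <= 2 * #|D0|.
  rewrite -(cardsID D0 G) (setIidPr D0G) mul2n -addnn leq_add2l.
  rewrite -(card_imset _ finj) subset_leq_card //.
  apply/subsetP => _ /imsetP [h /setDP [hG hD0] ->].
  move: hG hD0; rewrite !inE ff => /andP [h1 h2]; rewrite h1 h2 /= => nlt.
  rewrite ltn_neqAle leqNgt nlt andbT.
  apply/negP => /eqP /val_inj /enum_rank_inj E; by move: (fn h); rewrite E eqxx.
have cA : #|A| = #|U| + #|W :\: U|.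
  by rewrite /A cardsU cardsD (setIC W U) addnBA // subset_leq_card // subsetIr.
have cW : #|W :\: U| <= #|W| by apply: subset_leq_card; apply: subsetDl.
exists A, D0; split.
- by rewrite cA leq_add2l.
- apply/subsetP => h hD; move: (subsetP D0G _ hD); by rewrite inE => /andP [].
- rewrite cA -addnA addnC leq_add2r.
  rewrite -(leq_pmul2l (isT : 0 < 2)) (leq_trans _ GD0) // (leq_trans _ Glb) //.
  by rewrite mulnDr addnC leq_add.
- rewrite inE pf /=; apply/forallP => d; apply/implyP => dD.
  move: (dD); rewrite !inE => /andP [/andP [_ ->]] lt /=.
  apply/negP => /andP [_]; rewrite ff => lt'.
  by move: (ltn_trans lt lt'); rewrite ltnn.
Qed.

End Wit.

Unset Implicit Arguments.
Set Strict Implicit.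

Section R1s.
Local Open Scope R_scope.


Lemma exp_le_mono x y : x <= y -> exp x <= exp y.
Proof. intros [H|H]; [left; apply exp_increasing; auto | right; subst; auto]. Qed.

Lemma ln_le_mono x y : 0 < x -> x <= y -> ln x <= ln y.
Proof. intros Hx [H|H]; [left; apply ln_increasing; auto | right; subst; auto]. Qed.

Lemma pow_exp_le (p : R) (k : nat) : 0 <= p -> (1 + p) ^ k <= exp (p * INR k).
Proof.
intros Hp; induction k as [|k IH].
- simpl. rewrite Rmult_0_r exp_0. lra.
- rewrite S_INR. replace (p * (INR k + 1)) with (p * INR k + p) by ring.
  rewrite exp_plus. simpl. rewrite Rmult_comm.
  apply Rmult_le_compat; try lra.
  + apply pow_le; lra.
  + apply exp_ineq1_le.
Qed.

Lemma binom_le (p : R) (k s : nat) : 0 <= p -> INR 'C(k, s) * p ^ s <= (1 + p) ^ k.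
Proof.
intros Hp; revert s; induction k as [|k IH]; intros s.
  - destruct s as [|s]; [simpl; lra|]. rewrite bin0n. simpl. lra.
- destruct s as [|s].
  + rewrite bin0. simpl. assert (0 <= p) by lra.
    assert (1 <= (1 + p) ^ k).
    { clear IH; induction k as [|k IHk]; simpl; [lra|]. nra. }
    nra.
  + rewrite binS plus_INR. specialize (IH s) as H1. specialize (IH (S s)) as H2.
    simpl in *. assert (0 <= (1 + p) ^ k) by (apply pow_le; lra).
    nra.
Qed.

Lemma ln2_lt1 : ln 2 < 1.
Proof.
rewrite -[X in _ < X](ln_exp 1). apply ln_increasing; [lra|].
pose proof (exp_ineq1 1). lra.
Qed.

Lemma pow_as_exp (q : R) (k : nat) : 0 < q -> q ^ k = exp (INR k * ln q).
Proof. intros Hq. rewrite -Rpower_pow //. Qed.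

Lemma final_num (r m n t0 : nat) (eta : R) :
  3 <= INR r -> 1 <= INR m -> 0 < eta -> eta < INR r -> eta * INR m <= INR t0 ->
  4 * ((1 + INR r) * INR m) <= INR n ->
  2 * (1 + INR r) * (3 + INR r) / eta + 2 * ln (2 * (1 + INR r)) <= ln (INR n / INR m) ->
  (INR ((1 + r) * m) + 1) * exp (2 * INR ((1 + r) * m)) * 2 ^ ((1 + r) * m * r) *
    (2 * INR ((1 + r) * m) / INR n) ^ t0
  <= exp (- (eta ^ 2 / (8 * INR r)) * INR m * ln (INR n / INR m)).
Proof.
intros Hr Hm He Her Ht Hn Hl.
set (rr := INR r) in *. set (mm := INR m) in *. set (nn := INR n) in *.
assert (Es : INR ((1 + r) * m) = (1 + rr) * mm) by (rewrite mult_INR plus_INR; simpl; reflexivity).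
rewrite Es. set (sg := (1 + rr) * mm) in *.
set (lx := ln (nn / mm)) in *.
set (L2 := ln (2 * (1 + rr))) in *.
assert (HL2 : 0 <= L2).
{ unfold L2; rewrite -ln_1. apply ln_le_mono; lra. }
assert (Hsg : 0 < sg) by (unfold sg; nra).
assert (Hnn : 0 < nn) by lra.
set (q := 2 * sg / nn).
assert (Hq : 0 < q) by (unfold q; apply Rdiv_lt_0_compat; lra).
assert (Hq1 : q <= 1).
{ unfold q. apply Rmult_le_reg_r with nn; auto. unfold Rdiv. rewrite Rmult_assoc Rinv_l; lra. }
assert (Hlq : ln q = L2 - lx).
{ unfold q, lx, L2, sg. replace (2 * ((1 + rr) * mm) / nn) with ((2 * (1 + rr)) * / (nn / mm)).
  - assert (0 < nn / mm) by (apply Rdiv_lt_0_compat; lra).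
    rewrite ln_mult ?ln_Rinv; try lra. apply Rinv_0_lt_compat; lra.
  - field. split; lra. }
assert (Hlqn : ln q <= 0).
{ rewrite -ln_1. apply ln_le_mono; auto. }
assert (B1 : sg + 1 <= exp sg) by (pose proof (exp_ineq1_le sg); lra).
assert (B2 : 2 ^ ((1 + r) * m * r) <= exp (sg * rr)).
{ rewrite pow_as_exp; last lra. apply exp_le_mono.
  rewrite mult_INR Es. fold rr. pose proof ln2_lt1.
  assert (0 <= sg * rr) by nra. nra. }
assert (B3 : q ^ t0 <= exp (eta * mm * (L2 - lx))).
{ rewrite pow_as_exp; last auto. apply exp_le_mono. rewrite Hlq in Hlqn |- *. nra. }
assert (P1 : 0 <= sg + 1) by lra.
assert (P2 : 0 <= exp (2 * sg)) by (left; apply exp_pos).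
assert (P3 : 0 <= 2 ^ ((1 + r) * m * r)) by (apply pow_le; lra).
assert (P4 : 0 <= q ^ t0) by (apply pow_le; lra).
apply Rle_trans with (exp sg * exp (2 * sg) * exp (sg * rr) * exp (eta * mm * (L2 - lx))).
{ apply Rmult_le_compat; [| exact P4 | | fold q; exact B3].
  - apply Rmult_le_pos; [apply Rmult_le_pos|]; assumption.
  - apply Rmult_le_compat; [apply Rmult_le_pos; assumption | exact P3 | | exact B2].
    apply Rmult_le_compat; [exact P1 | exact P2 | exact B1 | lra]. }
rewrite -!exp_plus. apply exp_le_mono.
assert (HX : 2 * (1 + rr) * (3 + rr) + 2 * eta * L2 <= eta * lx).
{ apply Rmult_le_compat_l with (r := eta) in Hl; [|lra].
  replace (eta * (2 * (1 + rr) * (3 + rr) / eta + 2 * L2)) with (2 * (1 + rr) * (3 + rr) + 2 * eta * L2) in Hl by (field; lra).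
  exact Hl. }
assert (HX0 : 0 <= eta * lx) by nra.
assert (Hr8 : eta ^ 2 / (8 * rr) * lx <= eta * lx / 8).
{ replace (eta ^ 2 / (8 * rr) * lx) with ((eta / rr) * (eta * lx) / 8) by (field; lra).
  assert (eta / rr <= 1). { apply Rmult_le_reg_r with rr; [lra|]. unfold Rdiv. rewrite Rmult_assoc Rinv_l; lra. }
  assert (0 <= eta / rr) by (apply Rlt_le, Rdiv_lt_0_compat; lra).
  nra. }
unfold sg.
assert (0 <= mm) by lra.
replace (- (eta ^ 2 / (8 * rr)) * mm * lx) with (- (mm * (eta ^ 2 / (8 * rr) * lx))) by ring.
nra.
Qed.

End R1s.

Section R2s.
Local Open Scope R_scope.
Lemma INR_muln a b : INR (a * b)%N = INR a * INR b.
Proof. by rewrite -mult_INR. Qed.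
Lemma INR_expn a b : INR (a ^ b)%N = INR a ^ b.
Proof. rewrite -pow_INR. congr INR. elim: b => //= b IH. by rewrite expnS IH. Qed.
Lemma INR_addn a b : INR (a + b)%N = INR a + INR b.
Proof. by rewrite -plus_INR. Qed.
Lemma INR_subn a b : (b <= a)%N -> INR (a - b)%N = INR a - INR b.
Proof. move=> h. rewrite -minus_INR //. by apply/leP. Qed.
Lemma INR_leq a b : (a <= b)%N -> INR a <= INR b.
Proof. by move/leP; apply: le_INR. Qed.

Lemma term_bound (n r s t0 sg X P : nat) :
  (0 < n)%N -> (0 < r)%N -> (s <= sg)%N -> (4 * sg <= n)%N -> (s + t0 <= s * r)%N ->
  INR X * INR ((n * r - 2 * (s + t0)) ^ (s + t0))%N
    <= INR 'C(n, s) * INR 'C(s * r, s + t0) * INR P * INR ((s * r) ^ (s + t0))%N ->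
  INR X <= INR P * (exp (2 * INR sg) * 2 ^ (sg * r) * (2 * INR sg / INR n) ^ t0).
Proof.
move=> n0 r0 ssg hn he H.
set e := (s + t0)%N in he H *.
have Hr : 1 <= INR r := INR_leq _ _ r0.
have E4 : INR 4 = 4 by rewrite /=; lra.
have E2 : INR 2 = 2 by rewrite /=; lra.
have Hsg : INR s <= INR sg by apply: INR_leq.
have Hn4 : 4 * INR sg <= INR n by have := INR_leq _ _ hn; rewrite INR_muln E4.
have Hs0 : 0 <= INR s by apply: pos_INR.
have He : 4 * INR e <= INR n * INR r.
  have : (4 * e <= n * r)%N.
    apply: (leq_trans (n := 4 * (s * r))); first by rewrite leq_mul2l he orbT.
    by rewrite mulnA leq_mul2r (leq_trans _ hn) ?orbT // leq_mul2l ssg orbT.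
  by move/(INR_leq _ _); rewrite !INR_muln E4.
have Hsub : (2 * e <= n * r)%N.
  have : (4 * e <= n * r)%N.
    apply: (leq_trans (n := 4 * (s * r))); first by rewrite leq_mul2l he orbT.
    by rewrite mulnA leq_mul2r (leq_trans _ hn) ?orbT // leq_mul2l ssg orbT.
  by apply: leq_trans; rewrite leq_mul2r ltnW ?orbT.
rewrite INR_expn INR_subn // !INR_muln INR_expn !INR_muln in H.
set nn := INR n in H Hn4 He *. set rr := INR r in H Hr He *.
set ee := INR e in H He.
have Hnpos : 0 < nn by apply: (lt_INR 0); apply/ltP.
rewrite E2 in H.
set D := nn * rr - 2 * ee in H.
have HD : nn * rr / 2 <= D by rewrite /D; lra.
have Hnr : 0 < nn * rr by nra.
have HD0 : 0 < D by lra.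
set p := 2 * INR s / nn.
have Hp0 : 0 <= p by rewrite /p; apply: Rmult_le_pos; [lra | left; apply: Rinv_0_lt_compat].
have Ha : INR s * rr <= p * D.
  rewrite /p /D. have -> : 2 * INR s / nn * (nn * rr - 2 * ee) = 2 * INR s * rr - 4 * INR s * ee / nn.
    by field; lra.
  have : 4 * INR s * ee / nn <= INR s * rr.
    apply: (Rmult_le_reg_r nn) => //. have -> : 4 * INR s * ee / nn * nn = INR s * (4 * ee) by field; lra.
    nra.
  lra.
have HDe : 0 < D ^ e by apply: pow_lt.
have C1 : 0 <= INR 'C(n, s) by apply: pos_INR.
have C2 : 0 <= INR 'C(s * r, e) by apply: pos_INR.
have CP : 0 <= INR P by apply: pos_INR.
have H1 : INR X <= INR 'C(n, s) * INR 'C(s * r, e) * INR P * p ^ e.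
  apply: (Rmult_le_reg_r (D ^ e)) => //.
  apply: (Rle_trans _ _ _ H).
  rewrite [X in _ <= X]Rmult_assoc -Rpow_mult_distr.
  apply: Rmult_le_compat_l; first by apply: Rmult_le_pos => //; apply: Rmult_le_pos.
  apply: pow_incr; split => //; apply: Rmult_le_pos; lra.
have B1 : INR 'C(n, s) * p ^ s <= exp (2 * INR sg).
  apply: (Rle_trans _ _ _ (binom_le _ _ _ Hp0)).
  apply: (Rle_trans _ _ _ (pow_exp_le _ _ Hp0)).
  apply: exp_le_mono. rewrite /p. have -> : 2 * INR s / nn * nn = 2 * INR s by field; lra.
  lra.
have B2 : INR 'C(s * r, e) <= 2 ^ (sg * r).
  have := binom_le 1 (s * r) e ltac:(lra). rewrite pow1 Rmult_1_r => h.
  apply: (Rle_trans _ _ _ h). have -> : 1 + 1 = 2 by lra.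
  apply: Rle_pow; first by lra.
  by apply/leP; rewrite leq_mul2r ssg orbT.
have B3 : p ^ t0 <= (2 * INR sg / nn) ^ t0.
  apply: pow_incr; split => //. rewrite /p /Rdiv.
  apply: Rmult_le_compat_r; first by left; apply: Rinv_0_lt_compat.
  lra.
have Ep : p ^ e = p ^ s * p ^ t0 by rewrite /e pow_add.
rewrite Ep in H1.
apply: (Rle_trans _ _ _ H1).
have Pps : 0 <= p ^ s by apply: pow_le.
have Ppt : 0 <= p ^ t0 by apply: pow_le.
have -> : INR 'C(n, s) * INR 'C(s * r, e) * INR P * (p ^ s * p ^ t0) =
   INR P * ((INR 'C(n, s) * p ^ s) * INR 'C(s * r, e) * p ^ t0) by ring.
apply: Rmult_le_compat_l => //.
apply: Rmult_le_compat.
- apply: Rmult_le_pos => //; apply: Rmult_le_pos => //; apply: Rmult_le_pos.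
- done.
- apply: Rmult_le_compat => //; apply: Rmult_le_pos => //.
- done.
Qed.

End R2s.

Lemma card_bigcup_le (I T : finType) (P : pred I) (F : I -> {set T}) :
  (#|\bigcup_(i | P i) F i| <= \sum_(i | P i) #|F i|)%N.
Proof.
elim/big_rec2: _ => [|i k U _ h]; first by rewrite cards0.
by rewrite (leq_trans (leq_card_setU _ _).1) // leq_add2l.
Qed.


Definition Xs n r t0 s : nat :=
  \sum_(A : {set 'I_n} | #|A| == s)
     \sum_(D : {set halfedge n r} | (D \subset HS r A) && (#|D| == s + t0))
        #|Fset (HS r A) D|.

Lemma card_H n r : #|halfedge n r| = n * r.
Proof. by rewrite card_prod !card_ord. Qed.

Lemma Xs_bound n r t0 s :
  Xs n r t0 s * (n * r - 2 * (s + t0)) ^ (s + t0)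
   <= 'C(n, s) * ('C(s * r, s + t0) * (#|Pairs n r| * (s * r) ^ (s + t0))).
Proof.
set e := s + t0.
rewrite /Xs big_distrl /=.
apply: (@leq_trans (\sum_(A : {set 'I_n} | #|A| == s) ('C(s * r, e) * (#|Pairs n r| * (s * r) ^ e)))).
  apply: leq_sum => A /eqP cA. rewrite big_distrl /=.
  apply: (@leq_trans (\sum_(D : {set halfedge n r} | (D \subset HS r A) && (#|D| == e)) (#|Pairs n r| * (s * r) ^ e))).
    apply: leq_sum => D /andP [sD /eqP cD].
    by have := switch_bound (HS r A) D; rewrite cD card_HS cA card_H.
  rewrite (eq_bigl (fun D => D \in [set D : {set halfedge n r} | (D \subset HS r A) && (#|D| == e)]));
    last by move=> D; rewrite inE.
  by rewrite sum_nat_const cards_draws card_HS cA.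
rewrite (eq_bigl (fun A => A \in [set A : {set 'I_n} | #|A| == s])); last by move=> A; rewrite inE.
by rewrite sum_nat_const card_draws card_ord.
Qed.

Lemma Xs_zero n r t0 s : s * r < s + t0 -> Xs n r t0 s = 0.
Proof.
move=> h; rewrite /Xs big1 // => A /eqP cA; rewrite big1 // => D /andP [sD /eqP cD].
have := subset_leq_card sD; rewrite card_HS cA cD => h'.
by move: (leq_ltn_trans h' h); rewrite ltnn.
Qed.

Section Hlp.
Local Open Scope R_scope.
Lemma sum_INR_le (k : nat) (X : nat -> nat) (c : R) :
  (forall s, (s < k)%N -> (INR (X s) <= c)) ->
  (INR (\sum_(s < k) X s) <= INR k * c).
Proof.
elim: k => [|k IH] h; first by rewrite big_ord0 /=; lra.
rewrite S_INR big_ord_recr /= INR_addn.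
have h1 := IH (fun s hs => h s (ltnW hs)). have h2 := h k (ltnSn k).
apply: Rle_trans; first exact: (Rplus_le_compat _ _ _ _ h1 h2). lra.
Qed.

Lemma Rleb_true a b : Rleb a b -> (a <= b).
Proof. by rewrite /Rleb; case: Rle_dec. Qed.

Lemma Fset_mono n r (T D D' : {set halfedge n r}) f :
  D' \subset D -> f \in Fset T D -> f \in Fset T D'.
Proof.
move=> sD /FsetP [pf P]; rewrite inE pf /=; apply/forallP => d; apply/implyP => dD.
have [h1 h2] := P d (subsetP sD _ dD); rewrite h1 /=.
by apply: contra h2; apply: (subsetP sD).
Qed.

Lemma exists_t0 (x : R) : exists t0 : nat, (x <= INR t0) /\ forall t, (x <= INR t) -> (t0 <= t)%N.
Proof.
have ex : exists t, Rleb x (INR t).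
  have [t ht] := INR_unbounded x. exists t; rewrite /Rleb; case: Rle_dec => // h; lra.
case: (ex_minnP ex) => t0 h1 h2; exists t0; split; first exact: Rleb_true.
move=> t ht; apply: h2; rewrite /Rleb; case: Rle_dec => //.
Qed.

End Hlp.

From Stdlib Require Import Reals.

Theorem proposition1 (r : nat) (hr : (3 <= r)%N) :
  exists (eps3 : R -> R) (C3 : R),
    (forall a : R, (0 < a)%R -> (0 < eps3 a)%R) /\
    (forall a b : R, (0 < a)%R -> (a < b)%R -> (eps3 a < eps3 b)%R) /\
    forall (eta : R) (n m : nat),
      (0 < eta)%R -> ~~ odd (r * n) ->
      (INR m <= eps3 eta * INR n)%R ->
      (prob_pairing (fun f : {perm halfedge n r} =>
                       event_E m ((1 + eta) * INR m)%R f)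
       <= C3 * exp (- (eta ^ 2 / (8 * INR r)) * INR m * ln (INR n / INR m)))%R.
Proof.
have Hr3 : (3 <= INR r)%R by have := INR_leq _ _ hr; rewrite /=; lra.
set L2 := ln (2 * (1 + INR r)).
set Mc := (2 * (1 + INR r) * (3 + INR r))%R.
have HMc : (0 < Mc)%R by rewrite /Mc; nra.
exists (fun a => exp (- (Mc / a + 2 * L2))), 1%R.
split; first by move=> a _; apply: exp_pos.
split.
  move=> a b ha hab; apply: exp_increasing.
  have : (/ b < / a)%R by apply: Rinv_lt_contravar => //; nra.
  rewrite /Rdiv => h; nra.
move=> eta n m heta _ hm.
rewrite /prob_pairing.
set Ev := [set f | _]. set Pr := [set f : {perm halfedge n r} | is_pairing f].
set B := (1 * exp _)%R.
have HB : (0 <= B)%R by rewrite /B; left; rewrite Rmult_1_l; apply: exp_pos.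
suff main : (INR #|Ev| <= INR #|Pr| * B)%R.
  have EvP : Ev \subset Pr by apply/subsetP => f; rewrite !inE => /andP [-> _].
  case: (posnP #|Pr|) => hP.
    have : #|Ev| = 0%N by apply/eqP; rewrite -leqn0 -hP subset_leq_card.
    by move=> ->; rewrite /Rdiv /= Rmult_0_l.
  have hP' : (0 < INR #|Pr|)%R by apply: (lt_INR 0); apply/ltP.
  apply: (Rmult_le_reg_r (INR #|Pr|)) => //.
  rewrite /Rdiv Rmult_assoc Rinv_l; last by lra.
  by rewrite Rmult_1_r Rmult_comm.
case: (posnP m) => hm0.
  subst m; rewrite /B Rmult_1_l.
  have -> : (- (eta ^ 2 / (8 * INR r)) * INR 0 * ln (INR n / INR 0) = 0)%R by rewrite /=; ring.
  rewrite exp_0 Rmult_1_r; apply: le_INR; apply/leP; apply: subset_leq_card.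
  by apply/subsetP => f; rewrite !inE => /andP [-> _].
have Hm1 : (1 <= INR m)%R by have := INR_leq _ _ hm0.
set eps := exp (- (Mc / eta + 2 * L2)) in hm.
have Heps : (0 < eps)%R by apply: exp_pos.
have Hn0 : (0 < INR n)%R.
  have : (0 < eps * INR n)%R by lra.
  move=> h; have := pos_INR n; nra.
have Hlx : (Mc / eta + 2 * L2 <= ln (INR n / INR m))%R.
  rewrite -[X in (X <= _)%R]ln_exp; apply: ln_le_mono; first by apply: exp_pos.
  have -> : (exp (Mc / eta + 2 * L2) = / eps)%R by rewrite /eps exp_Ropp Rinv_inv.
  apply: (Rmult_le_reg_r (INR m * eps)%R); first by nra.
  have -> : (/ eps * (INR m * eps) = INR m)%R by field; lra.
  have -> : (INR n / INR m * (INR m * eps) = eps * INR n)%R by field; lra.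
  exact: hm.
have HL20 : (0 <= L2)%R by rewrite /L2 -ln_1; apply: ln_le_mono; lra.
have Hn4 : (4 * ((1 + INR r) * INR m) <= INR n)%R.
  have h1 : (2 * L2 <= ln (INR n / INR m))%R.
    have : (0 < Mc / eta)%R by apply: Rdiv_lt_0_compat.
    lra.
  have hnm : (0 < INR n / INR m)%R by apply: Rdiv_lt_0_compat; lra.
  have h2 := exp_le_mono _ _ h1.
  rewrite exp_ln // in h2.
  have E : (exp (2 * L2) = (2 * (1 + INR r)) * (2 * (1 + INR r)))%R.
    by rewrite (_ : (2 * L2 = L2 + L2)%R) ?exp_plus /L2 ?exp_ln //; lra.
  rewrite E in h2.
  have h3 : (4 * (1 + INR r) <= INR n / INR m)%R by nra.
  apply: (Rmult_le_reg_r (/ INR m)%R); first by apply: Rinv_0_lt_compat; lra.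
  have -> : (4 * ((1 + INR r) * INR m) * / INR m = 4 * (1 + INR r))%R by field; lra.
  exact: h3.
have r0 : (0 < r)%N by apply: leq_trans hr.
have Hnat4 : (4 * ((1 + r) * m) <= n)%N.
  apply/leP; apply: INR_le; rewrite !INR_muln INR_addn /=.
  have -> : (1 + 1 + 1 + 1 = 4)%R by ring. lra.
have Wit : forall f, f \in Ev -> exists U : {set 'I_n},
    [/\ #|U| = m, ((1 + eta) * INR m <= INR #|star2 f U|)%R & is_pairing f].
  move=> f; rewrite inE => /andP [pf /existsP [U /andP [/eqP cU hk]]].
  by exists U; split => //; apply: Rleb_true.
case: (Rlt_le_dec eta (INR r)) => Her; last first.
  have -> : #|Ev| = 0%N.
    apply: eq_card0 => f; apply/negP => fE.
    have [U [cU hk pf]] := Wit f fE.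
    have [h _] := witness U r0 pf.
    have := INR_leq _ _ h; rewrite !INR_muln cU /= => h'.
    have : (INR r * INR m <= eta * INR m)%R by apply: Rmult_le_compat_r; lra.
    have : (0 <= eta * INR m)%R by apply: Rmult_le_pos; lra.
    set kk := INR #|star2 f U| in hk h'. move=> a1 a2. clear -a1 a2 hk h' Hm1. lra.

  by rewrite /=; apply: Rmult_le_pos => //; apply: pos_INR.
have [t0 [Ht0 Ht0min]] := exists_t0 (eta * INR m).
set sg := ((1 + r) * m)%N.
have n0 : (0 < n)%N by apply/ltP; apply: INR_lt; rewrite /=.
have Hcnt : (#|Ev| <= \sum_(s < sg.+1) Xs n r t0 s)%N.
  have sub : Ev \subset \bigcup_(s < sg.+1) \bigcup_(A : {set 'I_n} | #|A| == s)
      \bigcup_(D : {set halfedge n r} | (D \subset HS r A) && (#|D| == s + t0)%N) Fset (HS r A) D.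
    apply/subsetP => f fE.
    have [U [cU hk pf]] := Wit f fE.
    have [h [A [D0 [cA sD0 cD0 fF]]]] := witness U r0 pf.
    move: h cA cD0 hk; set k := #|star2 f U| => h cA cD0 hk.
    have mk : (m <= k)%N.
      apply/leP; apply: INR_le. have : (0 <= eta * INR m)%R by apply: Rmult_le_pos; lra. lra.
    have t0k : (t0 <= k - m)%N.
      apply: Ht0min; rewrite INR_subn //; lra.
    rewrite cU in h cD0 cA.
    have sA : (#|A| < sg.+1)%N.
      rewrite ltnS /sg mulnDl mul1n (leq_trans cA) // leq_add2l.
      by apply: (leq_trans _ h); rewrite leq_pmull.
    have eD : (#|A| + t0 <= #|D0|)%N.
      apply: (leq_trans (n := #|A| + (k - m))); first by rewrite leq_add2l.
      by rewrite addnBA // leq_subLR (addnC m).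
    have [D sD cD] := subset_card_exact eD.
    apply/bigcupP; exists (Ordinal sA) => //; apply/bigcupP; exists A => //=.
    apply/bigcupP; exists D; first by rewrite (subset_trans sD sD0) cD eqxx.
    exact: Fset_mono sD fF.
  apply: (leq_trans (subset_leq_card sub)).
  apply: (leq_trans (card_bigcup_le _ _ _ _)); apply: leq_sum => s _.
  apply: (leq_trans (card_bigcup_le _ _ _ _)); rewrite /Xs; apply: leq_sum => A _.
  exact: card_bigcup_le.
set K := (exp (2 * INR sg) * 2 ^ (sg * r) * (2 * INR sg / INR n) ^ t0)%R.
have HK : (0 <= K)%R.
  rewrite /K; apply: Rmult_le_pos; [apply: Rmult_le_pos; [left; apply: exp_pos | apply: pow_le; lra] |].
  apply: pow_le; apply: Rmult_le_pos; [have := pos_INR sg; lra | left; apply: Rinv_0_lt_compat; lra].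
have HP0 : (0 <= INR #|Pr|)%R by apply: pos_INR.
have Hs : forall s, (s < sg.+1)%N -> (INR (Xs n r t0 s) <= INR #|Pr| * K)%R.
  move=> s hs; case: (leqP (s + t0) (s * r)) => he; last first.
    by rewrite Xs_zero //= Rmult_comm; apply: Rmult_le_pos.
  apply: (term_bound n r s t0 sg _ _ n0 r0 hs Hnat4 he).
  have := INR_leq _ _ (Xs_bound n r t0 s); rewrite !INR_muln.
  by rewrite !Rmult_assoc.
have tot := Rle_trans _ _ _ (INR_leq _ _ Hcnt) (sum_INR_le _ _ _ Hs).
apply: (Rle_trans _ _ _ tot).
have Hfin := final_num r m n t0 eta Hr3 Hm1 heta Her Ht0 Hn4 Hlx.
rewrite S_INR.
have -> : ((INR sg + 1) * (INR #|Pr| * K) = INR #|Pr| * ((INR sg + 1) * K))%R by ring.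
apply: Rmult_le_compat_l => //.
rewrite /B Rmult_1_l /K.
apply: (Rle_trans _ _ _ _ Hfin); right; rewrite /sg; ring.
Qed.
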